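(* Let $(R,\mathfrak{m})$ be a finite commutative local ring with identity whose maximal ideal $\mathfrak{m}$ is a principal ideal, and let $I$ be an ideal of $R$. Then $\Gamma''_I(R)$ is a planar graph.
   Context: For a commutative ring $R$ and an ideal $I$ of $R$, $\Gamma''_I(R)$ is the simple undirected graph whose vertex set is $\{x\in R\setminus I : xR+I\neq R\}$, and two distinct vertices $x,y$ are adjacent if and only if $x\notin yR+I$ and $y\notin xR+I$. A graph is planar if it can be drawn in the plane with edges meeting only at their endpoints. *)

(* Defs.v *)
From HB Require Import structures.
From mathcomp Require Import all_boot all_algebra.
From Stdlib Require Import Reals.

Set Implicit Arguments.
Unset Strict Implicit.
Unset Printing Implicit Defensive.

Import GRing.Theory.
Local Open Scope ring_scope.

Section Ideals.
Variable A : finComNzRingType.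

Definition is_ideal (I : {set A}) : Prop :=
  (0 \in I) /\
  (forall x y, x \in I -> y \in I -> x + y \in I) /\
  (forall r x, x \in I -> r * x \in I).

Definition principal_plus (x : A) (I : {set A}) : {set A} :=
  [set z | [exists r : A, exists i : A, (i \in I) && (z == x * r + i)]].

Definition principal (x : A) : {set A} := [set z | [exists r : A, z == x * r]].

Definition local_with_max (m : {set A}) : Prop :=
  is_ideal m /\ (1 \notin m) /\
  (forall J : {set A}, is_ideal J -> 1 \notin J -> J \subset m).

Definition Gpp_vertices (I : {set A}) : {set A} :=
  [set x | (x \notin I) && (principal_plus x I != [set: A])].

Definition Gpp_adj (I : {set A}) (x y : A) : Prop :=
  x <> y /\ x \notin principal_plus y I /\ y \notin principal_plus x I.

End Ideals.

Definition in01 (t : R) : Prop := Rle 0 t /\ Rle t 1.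
Definition in01o (t : R) : Prop := Rlt 0 t /\ Rlt t 1.

Definition planar_graph (T : finType) (Vs : {set T}) (adj : T -> T -> Prop) : Prop :=
  exists (pos : T -> R * R) (arc : T -> T -> R -> R * R),
    (forall u v, u \in Vs -> v \in Vs -> pos u = pos v -> u = v) /\
    (forall u v, u \in Vs -> v \in Vs -> adj u v ->
       (forall t, in01 t -> continuity_pt (fun s => fst (arc u v s)) t /\
                            continuity_pt (fun s => snd (arc u v s)) t) /\
       arc u v 0%R = pos u /\ arc u v 1%R = pos v /\
       (forall s t, in01 s -> in01 t -> arc u v s = arc u v t -> s = t) /\
       (forall w t, w \in Vs -> in01o t -> arc u v t <> pos w)) /\
    (forall u v u' v', u \in Vs -> v \in Vs -> u' \in Vs -> v' \in Vs ->
       adj u v -> adj u' v' ->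
       ~ ((u = u' /\ v = v') \/ (u = v' /\ v = u')) ->
       forall s t, in01o s -> in01o t -> arc u v s <> arc u' v' t).

(* Main.v *)
Require Import Defs.
From HB Require Import structures.
From mathcomp Require Import all_boot all_algebra.
From Stdlib Require Import Reals.
From mathcomp Require Import zify.

Set Implicit Arguments.
Unset Strict Implicit.
Unset Printing Implicit Defensive.
Import GRing.Theory.

Section Aux.
Variable A : finComNzRingType.
Variable m : {set A}.
Variable t : A.
Hypothesis Hm : local_with_max m.
Hypothesis Ht : m = principal t.

Local Open Scope ring_scope.

Lemma principalP (x z : A) : reflect (exists r, z = x * r) (z \in principal x).
Proof.
rewrite inE; apply: (iffP existsP) => [[r /eqP e]|[r e]]; exists r => //.
exact/eqP.
Qed.

Lemma principal_ideal (x : A) : is_ideal (principal x).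
Proof.
split; [|split].
- by apply/principalP; exists 0; rewrite mulr0.
- move=> a b /principalP[r ->] /principalP[s ->].
  by apply/principalP; exists (r + s); rewrite mulrDr.
- move=> r a /principalP[s ->]; apply/principalP; exists (r * s).
  by rewrite mulrCA.
Qed.

Lemma unit_notin (z : A) : z \notin m -> exists w, 1 = z * w.
Proof.
move=> zm; case: Hm => _ [_ Hmax].
have [/principalP[w e]|n1] := boolP (1 \in principal z); first by exists w.
have := Hmax _ (principal_ideal z) n1 => /subsetP /(_ z).
have -> : z \in principal z by apply/principalP; exists 1; rewrite mulr1.
by move=> /(_ isT) zm'; rewrite zm' in zm.
Qed.

Lemma strict (x x1 : A) : x != 0 -> x = t * x1 ->
  (#|principal x| < #|principal x1|)%nat.
Proof.
move=> nx ex; apply: proper_card; rewrite properE; apply/andP; split.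
  apply/subsetP => z /principalP[r ->]; apply/principalP; exists (t * r).
  by rewrite ex -mulrA mulrCA.
apply/negP => /subsetP /(_ x1).
have -> : x1 \in principal x1 by apply/principalP; exists 1; rewrite mulr1.
move=> /(_ isT) /principalP[a ea].
have nm : 1 - t * a \notin m.
  apply/negP => H; case: Hm => [[_ [Hadd _]] [n1 _]].
  have tam : t * a \in m by rewrite Ht; apply/principalP; exists a.
  by have := Hadd _ _ H tam; rewrite subrK (negbTE n1).
have [w ew] := unit_notin nm.
have : x1 * (1 - t * a) = 0.
  by rewrite mulrBr mulr1 mulrCA mulrA -ex -ea subrr.
move=> /(congr1 (fun q => q * w)); rewrite -mulrA -ew mulr1 mul0r => x10.
by move: nx; rewrite ex x10 mulr0 eqxx.
Qed.

Lemma divtot_n n : forall x y : A,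
  ((#|A| - #|principal x|) + (#|A| - #|principal y|) < n)%nat ->
  (exists a, y = x * a) \/ (exists a, x = y * a).
Proof.
elim: n => [//|n IH] x y Hlt.
case: (boolP (x \in m)) => xm; last first.
  by have [w ew] := unit_notin xm; left; exists (w * y); rewrite mulrA -ew mul1r.
case: (boolP (y \in m)) => ym; last first.
  by have [w ew] := unit_notin ym; right; exists (w * x); rewrite mulrA -ew mul1r.
case: (eqVneq x 0) => [->|nx]; first by right; exists 0; rewrite mulr0.
case: (eqVneq y 0) => [->|ny]; first by left; exists 0; rewrite mulr0.
move: xm ym; rewrite Ht => /principalP[x1 ex] /principalP[y1 ey].
have sx := strict nx ex; have sy := strict ny ey.
have cx : (#|principal x1| <= #|A|)%nat by apply: max_card.
have cy : (#|principal y1| <= #|A|)%nat by apply: max_card.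
have : ((#|A| - #|principal x1|) + (#|A| - #|principal y1|) < n)%nat.
  move: Hlt sx sy cx cy; clear; lia.
move=> /IH [[a ea]|[a ea]].
  by left; exists a; rewrite ey ea ex mulrA.
by right; exists a; rewrite ex ea ey mulrA.
Qed.

End Aux.


Theorem theorem3p10 (A : finComNzRingType) (m : {set A}) (I : {set A}) :
  local_with_max m ->
  (exists t : A, m = principal t) ->
  is_ideal I ->
  planar_graph (Gpp_vertices I) (Gpp_adj I).
Proof.
move=> Hm [t Ht] [I0 _].
have noadj : forall x y, ~ Gpp_adj I x y.
  move=> x y [_ [nx ny]].
  have [[a ea]|[a ea]] := divtot_n Hm Ht (ltnSn _) (x:=x) (y:=y).
    by move/negP: ny; apply; rewrite inE; apply/existsP; exists a; apply/existsP; exists (@GRing.zero A);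
       rewrite I0 ea addr0 eqxx.
  by move/negP: nx; apply; rewrite inE; apply/existsP; exists a; apply/existsP; exists (@GRing.zero A);
     rewrite I0 ea addr0 eqxx.
exists (fun u => (INR (enum_rank u), 0%R)), (fun _ _ _ => (0%R, 0%R)).
split; [|split].
- move=> u v _ _ [/INR_eq e]; apply: enum_rank_inj; exact: ord_inj.
- by move=> u v _ _ /noadj.
- by move=> u v u' v' _ _ _ _ /noadj.
Qed.
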